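(* Let $A\in\mathbb{R}^{m\times n}$, $b\in\mathbb{R}^m$, $\delta\ge0$ with $\{x:\|Ax-b\|\le\delta\}\neq\emptyset$. Then the exact penalty decomposition method described in the context, with parameters $\epsilon>0$, $\sigma>1$, $\rho_0>0$, terminates after at most $\left\lceil\frac{\ln(n)-\ln(\epsilon\rho_0)}{\ln\sigma}\right\rceil$ iterations.
   Context: Exact penalty decomposition method: (S.0) Given a tolerance $\epsilon>0$ and a ratio $\sigma>1$, choose $\rho_0>0$, set $v^0=e$ (the all-ones vector in $\mathbb{R}^n$) and $k:=0$. (S.1) Choose $x^{k+1}\in\arg\min_{x\in\mathbb{R}^n}\{\langle v^k,|x|\rangle:\ \|Ax-b\|\le\delta\}$. (S.2) For each $i$, set $v^{k+1}_i=0$ if $|x^{k+1}_i|>1/\rho_k$ and $v^{k+1}_i=1$ otherwise. (S.3) If $\langle v^{k+1},|x^{k+1}|\rangle\le\epsilon$, stop; otherwise go to (S.4). (S.4) Set $\rho_{k+1}=\sigma\rho_k$, $k:=k+1$, and go to (S.1). Here $\|\cdot\|$ is the Euclidean norm and $|x|$ the componentwise absolute value. *)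

(* Defs.v *)
From mathcomp Require Import all_boot all_order all_algebra.
From mathcomp Require Import all_classical all_reals all_analysis.
Set Implicit Arguments. Unset Strict Implicit. Unset Printing Implicit Defensive.
Import Order.TTheory GRing.Theory Num.Theory.
Local Open Scope ring_scope.

Definition enorm (R : realType) (m : nat) (y : 'cV[R]_m) : R :=
  Num.sqrt (\sum_(i < m) (y i 0) ^+ 2).

Definition feasible (R : realType) (m n : nat) (A : 'M[R]_(m, n)) (b : 'cV[R]_m)
  (delta : R) (x : 'cV[R]_n) : Prop :=
  enorm (A *m x - b) <= delta.

Definition wl1 (R : realType) (n : nat) (v x : 'cV[R]_n) : R :=
  \sum_(i < n) v i 0 * `|x i 0|.

(* The iterates are
   computed regardless of the stopping test (S.3); termination is then
   the first index k at which the test holds. *)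
Definition EPD_run (R : realType) (m n : nat) (A : 'M[R]_(m, n)) (b : 'cV[R]_m)
  (delta sigma rho0 : R) (x v : nat -> 'cV[R]_n) (rho : nat -> R) : Prop :=
  [/\ v 0%N = const_mx 1,
      (forall k, rho k = rho0 * sigma ^+ k),
      (forall k, feasible A b delta (x k.+1) /\
                 forall y, feasible A b delta y -> wl1 (v k) (x k.+1) <= wl1 (v k) y) &
      (forall k (i : 'I_n), v k.+1 i 0 = if `|x k.+1 i 0| > (rho k)^-1 then 0 else 1)].

Definition EPD_stops (R : realType) (n : nat) (eps : R) (x v : nat -> 'cV[R]_n) (k : nat) : Prop :=
  wl1 (v k.+1) (x k.+1) <= eps.

(* Main.v *)
Require Import Defs.
From mathcomp Require Import all_boot all_order all_algebra.
From mathcomp Require Import all_classical all_reals all_analysis.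
From mathcomp Require Import lra.
Import Order.TTheory GRing.Theory Num.Theory.
Local Open Scope ring_scope.

Theorem theorem3p2 (R : realType) (m n : nat) (A : 'M[R]_(m, n)) (b : 'cV[R]_m)
  (delta eps sigma rho0 : R) (x v : nat -> 'cV[R]_n) (rho : nat -> R) :
  (0 < n)%N -> 0 <= delta -> (exists y, feasible A b delta y) ->
  0 < eps -> 1 < sigma -> 0 < rho0 ->
  EPD_run A b delta sigma rho0 x v rho ->
  exists k : nat, EPD_stops eps x v k /\
    (k%:Z <= Num.max 0 (Num.ceil ((ln n%:R - ln (eps * rho0)) / ln sigma)))%R.
Proof.
move=> n0 _ _ e0 s1 r0 [_ Hrho _ Hv].
set c := Num.ceil _.
have K0 : (0 <= Num.max 0 c)%R by rewrite le_max lexx.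
have [k hk] : exists k : nat, Num.max 0 c = k%:Z.
  by move: K0; case: (Num.max 0 c) => [k|k] H; [exists k|].
exists k; split; last by rewrite hk.
have ls : 0 < ln sigma by apply: ln_gt0.
have s0 : 0 < sigma by apply: lt_trans s1.
have ck : (c <= k%:Z)%R by rewrite -hk le_max lexx orbT.
have ckR : (c%:~R : R) <= k%:R by rewrite -[k%:R]/((k%:Z)%:~R) ler_int.
have h1 : ln n%:R - ln (eps * rho0) <= k%:R * ln sigma.
  rewrite -ler_pdivrMr //; apply: le_trans (ceil_ge _) ckR.
have sk0 : 0 < sigma ^+ k by apply: exprn_gt0.
have er0 : 0 < eps * rho0 by apply: mulr_gt0.
have h2 : ln n%:R <= ln (eps * rho0 * sigma ^+ k).
  rewrite lnM ?posrE // lnXn // -[ln sigma *+ k]mulr_natl.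
  lra.
have hn : (n%:R : R) <= eps * rho k.
  rewrite Hrho mulrA -ler_ln ?posrE //.
    by rewrite ltr0n.
  by rewrite mulr_gt0.
have rk0 : 0 < rho k by rewrite Hrho mulr_gt0.
rewrite /EPD_stops /wl1.
apply: (@le_trans _ _ (\sum_(i < n) (rho k)^-1)).
  apply: ler_sum => i _; rewrite Hv; case: ifP => H.
    by rewrite mul0r invr_ge0 ltW.
  by rewrite mul1r leNgt H.
rewrite sumr_const card_ord -[_ *+ n]mulr_natr mulrC ler_pdivrMr // mulrC.
Qed.
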